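(* Let $p$ be a prime, $q=p^l$ ($l\ge 1$), $m\ge 1$ an integer and $n=2m$. Let $\alpha$ be a primitive element of $\mathbb{F}_{q^n}$. For $0\leqslant r\leqslant n(q-1)$ and $k\in M_r$, let $$\Theta^{(r)}_k=\{\alpha^u \mid 0\leqslant u\leqslant q^n-1,\ \mathrm{wt}_q(u)=n(q-1)-r,\ |O(u)-E(u)|=k\}.$$ Then $$\big|\Theta^{(r)}_k\big|=\begin{cases}2\left(\sum_{i=0}^{m}(-1)^i\binom{m}{i}\binom{\frac{n(q-1)-r-k}{2}-iq+m-1}{\frac{n(q-1)-r-k}{2}-iq}\right)\left(\sum_{i=0}^{m}(-1)^i\binom{m}{i}\binom{\frac{n(q-1)-r+k}{2}-iq+m-1}{\frac{n(q-1)-r+k}{2}-iq}\right) & \text{if } k\neq 0,\\[2mm] \left(\sum_{i=0}^{m}(-1)^i\binom{m}{i}\binom{\frac{n(q-1)-r}{2}-iq+m-1}{\frac{n(q-1)-r}{2}-iq}\right)^2 & \text{if } k=0.\end{cases}$$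
   Context: Every integer $u$ with $0\leqslant u\leqslant q^n-1$ is written uniquely as $u=\sum_{i=0}^{n-1}u_iq^i$ with $u_i\in\{0,1,\dots,q-1\}$; $\mathrm{wt}_q(u)=\sum_{i=0}^{n-1}u_i$, $O(u)=\sum_{i \text{ odd}}u_i$, $E(u)=\sum_{i\text{ even}}u_i$ (indices $0\le i\le n-1$). For $0\leqslant r\leqslant n(q-1)$, $M_r$ is the set of even integers $k$ with $0\le k\le m(q-1)$ if $r$ is even, and the set of odd integers $k$ with $0\le k\le m(q-1)$ if $r$ is odd. Binomial coefficients $\binom{a}{b}$ with $b<0$ are taken to be $0$. *)

(* Defs.v *)
From mathcomp Require Import all_boot all_order all_algebra.
Set Implicit Arguments. Unset Strict Implicit. Unset Printing Implicit Defensive.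
Import Order.TTheory GRing.Theory Num.Theory.

Definition digit (q n u i : nat) : nat := (u %/ q ^ i) %% q.
Definition wtq (q n u : nat) : nat := \sum_(i < n) digit q n u i.
Definition Osum (q n u : nat) : nat := \sum_(i < n | odd i) digit q n u i.
Definition Esum (q n u : nat) : nat := \sum_(i < n | ~~ odd i) digit q n u i.

Local Open Scope ring_scope.

Definition Theta (F : finFieldType) (alpha : F) (q n r k : nat) : {set F} :=
  [set (alpha ^+ (nat_of_ord u))%R | u : 'I_(q ^ n)
     & (wtq q n u == (n * (q - 1) - r)%N) && (`|(Osum q n u)%:Z - (Esum q n u)%:Z|%N == k)%N].

Definition binz (m : nat) (t : int) : int :=
  match t with
  | Posz t' => ('C(t' + m - 1, t'))%:Z
  | Negz _ => 0%R
  end.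

Definition Ssum (q m : nat) (a : int) : int :=
  (\sum_(i < m.+1) (-1) ^+ i * ('C(m, i))%:Z * binz m (a - (i * q)%:Z))%R.

(* Main.v *)
Require Import Defs.
From mathcomp Require Import all_boot all_order all_algebra.
From mathcomp Require Import zify ring lra.
Import Order.TTheory GRing.Theory Num.Theory.

Module PA.
Local Open Scope ring_scope.

Fixpoint cnt (q m : nat) (s : int) : int :=
  if m is m'.+1 then \sum_(d < q) cnt q m' (s - d%:Z) else (s == 0)%:R.

Lemma binz_neg m (t : int) : t < 0 -> binz m t = 0.
Proof. by case: t. Qed.

Lemma binz_pascal m (t : int) : binz m.+1 t = binz m.+1 (t - 1) + binz m t.
Proof.
case: t => [t|t] /=; last first.
  by rewrite /binz; case: (Negz t - 1) => //= *; rewrite addr0.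
case: t => [|t].
  rewrite /binz /=; rewrite ?bin0 ?add0r //.
have -> : (Posz t.+1 - 1) = Posz t by lia.
rewrite /binz.
have -> : (t.+1 + m.+1 - 1 = (t + m).+1)%N by lia.
have -> : (t.+1 + m - 1 = t + m)%N by lia.
have -> : (t + m.+1 - 1 = t + m)%N by lia.
by rewrite binS PoszD addrC.
Qed.

Lemma binz_tele m (t : int) j :
  \sum_(d < j) binz m (t - d%:Z) = binz m.+1 t - binz m.+1 (t - j%:Z).
Proof.
elim: j => [|j IH]; first by rewrite big_ord0 subr0 subrr.
rewrite big_ord_recr /= IH (binz_pascal m (t - j%:Z)).
have -> : t - j%:Z - 1 = t - (j.+1)%:Z by lia.
ring.
Qed.

Lemma pascal_sum m (g : nat -> int) :
  \sum_(i < m.+2) (-1) ^+ i * ('C(m.+1, i))%:Z * g i =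
  \sum_(i < m.+1) (-1) ^+ i * ('C(m, i))%:Z * (g i - g i.+1).
Proof.
rewrite big_ord_recl /=.
under eq_bigr => i _ do rewrite /bump /= binS PoszD mulrDr mulrDl.
rewrite big_split /=.
under [X in _ = X]eq_bigr => i _ do rewrite mulrBr.
rewrite sumrB.
rewrite [in RHS]big_ord_recl /=.
rewrite [X in _ + (X + _) = _]big_ord_recr /= (bin_small (ltnSn m)) mulr0 mul0r addr0.
rewrite /bump /=.
under eq_bigr => i _ do rewrite add1n.
under [X in _ + (_ + X) = _]eq_bigr => i _ do rewrite add1n.
rewrite !bin0.
have -> : \sum_(i < m.+1) (-1) ^+ i.+1 * ('C(m, i))%:Z * g i.+1 =
   - \sum_(i < m.+1) (-1) ^+ i * ('C(m, i))%:Z * g i.+1.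
  rewrite -sumrN; apply: eq_bigr => i _; rewrite exprS; ring.
ring.
Qed.

Lemma subSq (a : int) i q : a - (i.+1 * q)%:Z = a - (i * q)%:Z - q%:Z.
Proof. lia. Qed.

Lemma Ssum_rec q m (a : int) :
  Ssum q m.+1 a = \sum_(d < q) Ssum q m (a - d%:Z).
Proof.
rewrite /Ssum (pascal_sum m (fun i => binz m.+1 (a - (i * q)%:Z))) /=.
under eq_bigr => i _ do rewrite (subSq a i q).
under eq_bigr => i _ do rewrite -(binz_tele m (a - (i * q)%:Z) q) mulr_sumr.
rewrite exchange_big /=; apply: eq_bigr => d _; apply: eq_bigr => i _.
congr (_ * binz _ _); last by lia.
Qed.

Lemma Ssum_cnt q m (a : int) : Ssum q m a = cnt q m a.
Proof.
elim: m a => [|m IH] a.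
  rewrite /Ssum big_ord1 /= mul0n subr0 expr0 mul1r bin0 mul1r.
  case: a => [n|n] //; case: n => [|t] //.
  by rewrite /binz addn0 bin_small //= subn1.
by rewrite Ssum_rec /=; apply: eq_bigr => d _; rewrite IH.
Qed.

End PA.
Import PA.

Module PB.

Lemma split_nat (R : nmodType) a b (F : nat -> R) :
  (\sum_(0 <= u < a * b) F u = \sum_(0 <= v < b) \sum_(0 <= d < a) F (d + v * a)%N)%R.
Proof.
elim: b => [|b IH]; first by rewrite muln0 !big_geq.
rewrite big_nat_recr //= -IH mulnS addnC.
rewrite [LHS](@big_cat_nat _ _ _ (a * b)) //=; last by rewrite leq_addr.
congr (_ + _)%R.
rewrite -{1}(add0n (a * b)) big_addn addKn.
by apply: eq_bigr => i _; rewrite mulnC.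
Qed.

Lemma div_small_add d v a : d < a -> (d + v * a) %/ a = v.
Proof. move=> lt; rewrite divnDMl ?divn_small //; by case: a lt. Qed.

Lemma mod_small_add d v a : d < a -> (d + v * a) %% a = d.
Proof. by move=> lt; rewrite addnC modnMDl modn_small. Qed.

Lemma digit_SS q n n' u i : digit q n u i.+2 = digit q n' (u %/ q ^ 2) i.
Proof. by rewrite /digit -divnMA -expnD. Qed.

Lemma Esum_step q n u :
  Esum q n.+2 u = digit q n u 0 + Esum q n (u %/ q ^ 2).
Proof.
rewrite /Esum big_mkcond big_ord_recl big_ord_recl /= [X in _ = _ + X]big_mkcond add0n.
congr (_ + _); apply: eq_bigr => i _.
by rewrite /bump /= !add1n /= negbK (digit_SS q _ n).
Qed.

Lemma Osum_step q n u :
  Osum q n.+2 u = digit q n u 1 + Osum q n (u %/ q ^ 2).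
Proof.
rewrite /Osum big_mkcond big_ord_recl big_ord_recl /= [X in _ = _ + X]big_mkcond add0n.
congr (_ + _); apply: eq_bigr => i _.
by rewrite /bump /= !add1n /= negbK (digit_SS q _ n).
Qed.

End PB.
Import PB.

Module PC.
Local Open Scope ring_scope.

Definition ff q m (e o : int) : int :=
  \sum_(0 <= u < q ^ (2 * m))
     ((Esum q (2 * m) u)%:Z == e)%:R * ((Osum q (2 * m) u)%:Z == o)%:R.

Lemma eq_shift (x y : nat) (e : int) : (Posz (x + y) == e) = (Posz y == e - x%:Z).
Proof. by apply/eqP/eqP; lia. Qed.

Lemma ff_rec q m e o : (0 < q)%N ->
  ff q m.+1 e o = \sum_(0 <= d0 < q) \sum_(0 <= d1 < q) ff q m (e - d0%:Z) (o - d1%:Z).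
Proof.
move=> q0; rewrite /ff.
have -> : (2 * m.+1 = (2 * m).+2)%N by lia.
have -> : (q ^ (2 * m).+2 = (q * q) * q ^ (2 * m))%N by rewrite !expnS mulnA.
rewrite split_nat.
under eq_bigr => v _ do rewrite split_nat.
rewrite exchange_big /=.
under eq_bigr => d1 _ do rewrite exchange_big /=.
rewrite exchange_big /=.
apply: eq_big_nat => d0 /andP[_ h0]; apply: eq_big_nat => d1 /andP[_ h1].
apply: eq_bigr => v _.
have hd : (d0 + d1 * q < q * q)%N by nia.
rewrite Esum_step Osum_step div_small_add //.
have -> : (d0 + d1 * q + v * (q * q) = d0 + (d1 + v * q) * q)%N by ring.
rewrite /digit expn0 expn1 divn1 mod_small_add // div_small_add // mod_small_add //.
by rewrite !eq_shift.
Qed.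

Lemma ff_cnt q m e o : (0 < q)%N -> ff q m e o = cnt q m e * cnt q m o.
Proof.
move=> q0; elim: m e o => [|m IH] e o.
  rewrite /ff muln0 expn0 big_nat1 /Esum /Osum !big_ord0 /=.
  by rewrite ![(0%:Z == _)]eq_sym.
rewrite ff_rec //= big_mkord mulr_suml.
apply: eq_bigr => d0 _; rewrite mulr_sumr big_mkord; apply: eq_bigr => d1 _.
by rewrite IH.
Qed.

End PC.
Import PC.

Module PD.
Local Open Scope ring_scope.

Lemma mod_cases N u v : (u <= N)%N -> (v <= N)%N -> u = v %[mod N] ->
  u = v \/ (u = 0 /\ v = N)%N \/ (u = N /\ v = 0)%N.
Proof.
move=> hu hv; case: (ltngtP u N) => [lu||eu]; last 2 first.
- by move=> h; lia.
- subst u; rewrite modnn; case: (ltngtP v N) => [lv||ev].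
  + by rewrite modn_small // => <-; right; right.
  + by move=> h; lia.
  + by left.
- case: (ltngtP v N) => [lv||ev].
  + by rewrite !modn_small //; left.
  + by move=> h; lia.
  + by subst v; rewrite modnn modn_small // => ->; right; left.
Qed.

Lemma wtq0 q n : wtq q n 0 = 0%N.
Proof. by rewrite /wtq big1 // => i _; rewrite /digit div0n mod0n. Qed.

Lemma wtq_max q n : (1 < q)%N -> (0 < n)%N -> (0 < wtq q n (q ^ n).-1)%N.
Proof.
move=> q1; case: n => [|n] // _.
rewrite /wtq big_ord_recl /= /digit expn0 divn1.
have -> : ((q ^ n.+1).-1 = (q - 1) + (q ^ n - 1) * q)%N.
  have : (0 < q ^ n)%N by rewrite expn_gt0; lia.
  rewrite expnS; nia.
rewrite mod_small_add; lia.
Qed.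

Lemma wtq_split q n u : wtq q n u = (Osum q n u + Esum q n u)%N.
Proof. by rewrite /wtq (bigID (fun i : 'I_n => odd i)). Qed.

Lemma ind_nz (E O W k : nat) (a : int) : (k != 0)%N -> W%:Z = 2 * a + k%:Z ->
  ((((O + E) == W) && (`|O%:Z - E%:Z|%N == k))%N%:R : int) =
  (E%:Z == a)%:R * (O%:Z == a + k%:Z)%:R + (E%:Z == a + k%:Z)%:R * (O%:Z == a)%:R.
Proof.
move=> hk hW.
case: (boolP (E%:Z == a)) => /eqP h1; case: (boolP (O%:Z == a + k%:Z)) => /eqP h2;
case: (boolP (E%:Z == a + k%:Z)) => /eqP h3; case: (boolP (O%:Z == a)) => /eqP h4;
case: (boolP ((O + E == W) && (`|O%:Z - E%:Z|%N == k))%N) => h5 /=;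
  rewrite ?mulr0 ?mul0r ?mulr1 ?addr0 ?add0r //; lia.
Qed.

Lemma ind_z (E O W : nat) (a : int) : W%:Z = 2 * a ->
  ((((O + E) == W) && (`|O%:Z - E%:Z|%N == 0))%N%:R : int) =
  (E%:Z == a)%:R * (O%:Z == a)%:R.
Proof.
move=> hW.
case: (boolP (E%:Z == a)) => /eqP h1; case: (boolP (O%:Z == a)) => /eqP h4;
case: (boolP ((O + E == W) && (`|O%:Z - E%:Z|%N == 0))%N) => h5 /=;
  rewrite ?mulr0 ?mul0r ?mulr1 ?addr0 ?add0r //; lia.
Qed.

End PD.
Import PD.

Theorem lemma3p2 (p l m : nat) (F : finFieldType) (alpha : F) (r k : nat) :
  prime p -> 0 < l -> 0 < m ->
  #|F| = (p ^ l) ^ (2 * m) ->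
  (((p ^ l) ^ (2 * m)).-1.-primitive_root alpha)%R ->
  r <= (2 * m) * (p ^ l - 1) ->
  k <= m * (p ^ l - 1) -> odd k = odd r ->
  let q := p ^ l in
  let n := 2 * m in
  let N := Posz (n * (q - 1)) in
  (Posz #|Theta alpha q n r k| =
  (if k != 0 then
     2 * Ssum q m ((N - r%:Z - k%:Z) %/ 2)%Z * Ssum q m ((N - r%:Z + k%:Z) %/ 2)%Z
   else (Ssum q m ((N - r%:Z) %/ 2)%Z) ^+ 2))%R.
Proof.
move=> hp hl hm hF hprim hr hk hodd q n N.
have q1 : 1 < q by rewrite /q; have := ltn_expl l (prime_gt1 hp); lia.
have q0 : 0 < q by lia.
set Q := q ^ n.
set P := fun u : nat => (wtq q n u == (n * (q - 1) - r)%N) &&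
   (`|((Osum q n u)%:Z - (Esum q n u)%:Z)%R|%N == k)%N.
have hcard : #|Theta alpha q n r k| = \sum_(0 <= u < Q) (P u : nat).
  rewrite /Theta card_in_imset; last first.
    move=> u v; rewrite !inE => Pu Pv /eqP.
    rewrite (eq_prim_root_expr hprim) => /eqP huv.
    apply: val_inj => /=.
    have := ltn_ord u; have := ltn_ord v; rewrite -/Q => hu hv.
    rewrite -/q -/n -/Q in huv.
    move: Pu Pv; rewrite /= => /andP[/eqP Pu _] /andP[/eqP Pv _].
    have hn : 0 < n by rewrite /n; lia.
    have hw := @wtq_max q n q1 hn; rewrite -/Q in hw.
    have key : forall x y : nat, x < Q -> y < Q -> x = y %[mod Q.-1] ->
        wtq q n x = wtq q n y -> x = y.
      move=> x y hx hy hxy hwt.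
      have hx' : x <= Q.-1 by move: hx; case: (Q).
      have hy' : y <= Q.-1 by move: hy; case: (Q).
      have [//|[[h1 h2]|[h1 h2]]] := mod_cases _ _ _ hx' hy' hxy.
      - by move: hw; rewrite -h2 -hwt h1 wtq0.
      - by move: hw; rewrite -h1 hwt h2 wtq0.
    by apply: key => //; rewrite Pu Pv.
  rewrite -sum1_card big_mkcond /= big_mkord.
  apply: eq_bigr => i _; rewrite inE /P /=; by case: ifP.
rewrite hcard.
set t := (r + k)./2.
have ht : (r + k = 2 * t)%N.
  by rewrite /t -{1}(odd_double_half (r + k)) oddD hodd addbb add0n -mul2n.
set M := m * (q - 1).
have hN : (n * (q - 1) = 2 * M)%N by rewrite /M /n mulnA.
set a : int := ((Posz M) - (Posz t))%R.
set W := (n * (q - 1) - r)%N.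
have hW : (Posz W) = (2 * a + (Posz k))%R by rewrite /W /a hN; lia.
have hs : Posz (\sum_(0 <= u < Q) (P u : nat)) = (\sum_(0 <= u < Q) ((P u : nat)%:R : int))%R.
  by rewrite -natr_sum natz.
have hff : forall e o, (\sum_(0 <= u < Q) ((Posz (Esum q n u)) == e)%:R * ((Posz (Osum q n u)) == o)%:R)%R = ff q m e o by [].
rewrite hs.
case: ifP => /eqP hk0.
- have ha : ((N - (Posz r) - (Posz k)) %/ 2)%Z = a.
    have -> : (N - (Posz r) - (Posz k) = 2 * a)%R by rewrite /N hN /a; lia.
    by rewrite mulKz.
  have hb : ((N - (Posz r) + (Posz k)) %/ 2)%Z = (a + (Posz k))%R.
    have -> : (N - (Posz r) + (Posz k) = 2 * (a + (Posz k)))%R by rewrite /N hN /a; lia.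
    by rewrite mulKz.
  rewrite ha hb.
  under eq_bigr => u _ do rewrite /P wtq_split (ind_nz _ _ _ _ _ (introN eqP hk0) hW).
  rewrite big_split /= !hff !ff_cnt // !Ssum_cnt.
  ring.
- subst k.
  have ha : ((N - (Posz r)) %/ 2)%Z = a.
    have -> : (N - (Posz r) = 2 * a)%R by rewrite /N hN /a; lia.
    by rewrite mulKz.
  have hW' : (Posz W) = (2 * a)%R by rewrite hW addr0.
  rewrite ha.
  under eq_bigr => u _ do rewrite /P wtq_split (ind_z _ _ _ _ hW').
  by rewrite hff ff_cnt // Ssum_cnt expr2.
Qed.
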